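(* There exists an absolute constant $C>0$ such that the following holds. Let $\mathcal D$ be a distribution on $[0,1]\times\{0,1\}$, $m$ a positive integer, and $i\in\{0,\ldots,m\}$. For every $\alpha>0$, $$\sum_{j<i}\mathbb I\big[q_j>i/m-\alpha/\sqrt{\pi_j}\big]\sqrt{\pi_j}\le 3+C\log m\,\big(\alpha m+\sqrt{m\cdot\mathsf{SCDL}_m(\mathcal D)}\big),$$ where the sum is over $j\in\{0,\ldots,i-1\}$.
   Context: For $x\in\mathbb R$ write $x_+=\max\{x,0\}$. For $j\in\{0,\ldots,m\}$ let $w_j(p)=(1-|mp-j|)_+$, $\pi_j=\mathbb E_{(p,y)\sim\mathcal D}[w_j(p)]$ and $q_j=\mathbb E_{(p,y)\sim\mathcal D}[w_j(p)y]/\pi_j$; terms with $\pi_j=0$ contribute $0$. Define $$\mathsf{SCDL}_m(\mathcal D)=\max_{k=0,\ldots,m}\Big(\sum_{j=0}^{k}\pi_j\big(q_j-\tfrac{k+1}{m}\big)_+ +\sum_{j=k+1}^{m}\pi_j\big(\tfrac km-q_j\big)_+\Big).$$ *)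

(* Defs.v *)
From HB Require Import structures.
From mathcomp Require Import all_boot all_order all_algebra.
From mathcomp Require Import all_classical all_reals all_analysis.
From mathcomp Require Import Rstruct Rstruct_topology.
Set Implicit Arguments. Unset Strict Implicit. Unset Printing Implicit Defensive.
Import Order.TTheory GRing.Theory Num.Theory.
Local Open Scope classical_set_scope.
Local Open Scope ring_scope.

Notation RR := Rdefinitions.R.
Notation Omega := (measurableTypeR RR * bool)%type.

(* a distribution D on [0,1] x {0,1}: a probability measure on R * bool
   whose first marginal is concentrated on [0,1]; y : bool is read as 0/1. *)
Definition supported01 (P : probability Omega RR) : Prop :=
  P (`[(0:RR), 1] `*` setT) = 1%E.

Definition ind (b : bool) : RR := if b then 1 else 0.

Definition posp (x : RR) : RR := Num.max x 0.

Definition wj (m j : nat) (p : RR) : RR := posp (1 - `|m%:R * p - j%:R|).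

Definition piD (P : probability Omega RR) (m j : nat) : RR :=
  Rintegral P setT (fun x => wj m j (x.1 : RR)).

(* q_j = E[w_j(p) y] / pi_j  (division by 0 gives 0) *)
Definition qD (P : probability Omega RR) (m j : nat) : RR :=
  Rintegral P setT (fun x => wj m j (x.1 : RR) * (x.2)%:R) / piD P m j.

Definition SCDL (P : probability Omega RR) (m : nat) : RR :=
  \big[Num.max/0]_(k < m.+1)
    (\sum_(j < k.+1) piD P m j * posp (qD P m j - k.+1%:R / m%:R)
     + \sum_(k.+1 <= j < m.+1) piD P m j * posp (k%:R / m%:R - qD P m j)).

(* Main.v *)
Require Import Defs.
From HB Require Import structures.
From mathcomp Require Import all_boot all_order all_algebra.
From mathcomp Require Import all_classical all_reals all_analysis.
From mathcomp Require Import Rstruct Rstruct_topology.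
From mathcomp Require Import ring lra zify.
From mathcomp Require Import measurable_realfun.
Import Order.TTheory GRing.Theory Num.Theory.
Local Open Scope classical_set_scope.
Local Open Scope ring_scope.
Set Warnings "-all".
Lemma CS (s : seq nat) (x : nat -> RR) :
  (\sum_(j <- s) x j) ^+ 2 <= (size s)%:R * \sum_(j <- s) x j ^+ 2.
Proof.
elim: s => [|a s IH]; first by rewrite !big_nil mulr0 expr2 mulr0.
rewrite !big_cons /=.
set A := \sum_(j <- s) x j in IH *; set Q := \sum_(j <- s) x j ^+ 2 in IH *.
set n := (size s)%:R in IH *.
have n0 : 0 <= n by rewrite /n ler0n.
rewrite -natr1 -/n.
have Q0 : 0 <= Q by apply: sumr_ge0 => j _; exact: sqr_ge0.
have h1 : 0 <= (n * x a - A) ^+ 2 by exact: sqr_ge0.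
have [n0e|np] := eqVneq n 0.
  have H : A ^+ 2 <= 0 by move: IH; rewrite n0e mul0r. have : A ^+2 = 0 by apply/le_anti; rewrite H sqr_ge0.
  move/eqP; rewrite sqrf_eq0 => /eqP ->; rewrite n0e; nra.
have n1 : 0 < n by rewrite lt_neqAle eq_sym np n0.
have key : 2 * x a * A <= n * x a ^+ 2 + Q.
  rewrite -(ler_pM2l n1); nra.
nra.
Qed.

Section Key.
Variables (m i : nat) (pi q : nat -> RR) (S alpha : RR).
Hypotheses (hm : (0 < m)%N) (him : (i <= m)%N) (hpi : forall j, 0 <= pi j)
  (ha : 0 < alpha)
  (hS : forall k, (k < m)%N ->
     \sum_(0 <= j < k.+1) pi j * posp (q j - k.+1%:R / m%:R) <= S).

Let f j := ind (i%:R / m%:R - alpha / Num.sqrt (pi j) < q j) * Num.sqrt (pi j).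
Let B := m%:R * alpha + Num.sqrt (m%:R * S).

Lemma posp_ge0 x : 0 <= posp x.
Proof. by rewrite /posp le_max lexx orbT. Qed.

Lemma posp_ge x : x <= posp x.
Proof. by rewrite /posp le_max lexx. Qed.

Lemma f_ge0 j : 0 <= f j.
Proof. by rewrite /f /ind; case: ifP => _; rewrite ?mul1r ?mul0r ?sqrtr_ge0. Qed.

Lemma S_ge0 : 0 <= S.
Proof.
apply: le_trans _ (hS 0%N hm); apply: sumr_ge0 => j _.
by apply: mulr_ge0; [exact: hpi | exact: posp_ge0].
Qed.

Lemma B_ge0 : 0 <= B.
Proof.
rewrite /B; apply: addr_ge0; last exact: sqrtr_ge0.
by apply: mulr_ge0; [rewrite ler0n | exact: ltW].
Qed.

Lemma block lo hi h : (0 < h)%N -> (hi <= lo \/ hi + h <= i)%N ->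
  (hi - lo <= h)%N -> \sum_(lo <= j < hi) f j <= B.
Proof.
move=> h0 hcase hlen.
have [hl|lh] := leqP hi lo.
  by rewrite big_geq // B_ge0.
have hhi : (hi + h <= i)%N by case: hcase => //; rewrite leqNgt lh.
set k := (i - h).-1.
have k1 : k.+1 = (i - h)%N by rewrite /k prednK //; lia.
have km : (k < m)%N by lia.
pose g j := pi j * posp (q j - k.+1%:R / m%:R).
have g0 j : 0 <= g j by apply: mulr_ge0; [exact: hpi | exact: posp_ge0].
have mpos : 0 < m%:R :> RR by rewrite ltr0n.
have step1 : \sum_(lo <= j < hi) (h%:R / m%:R * f j ^+ 2 - alpha * f j) <= S.
  apply: le_trans _ (hS k km).
  apply: (@le_trans _ _ (\sum_(lo <= j < hi) g j)).
    apply: ler_sum => j _.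
    rewrite /f /g /ind; case: ifP => hind; last first.
      by rewrite !mul0r expr0n /= mulr0 mulr0 subr0 g0.
    rewrite !mul1r sqr_sqrtr ?hpi //.
    have [p0|pp] := eqVneq (pi j) 0.
      by rewrite p0 sqrtr0 !mulr0 mul0r subr0.
    have ppos : 0 < pi j by rewrite lt_neqAle eq_sym pp hpi.
    have spos : 0 < Num.sqrt (pi j) by rewrite sqrtr_gt0.
    have hq : h%:R / m%:R - alpha / Num.sqrt (pi j) <= posp (q j - k.+1%:R / m%:R).
      apply: le_trans (posp_ge _).
      rewrite k1 natrB; last lia.
      move: hind; rewrite !mulrBl; lra.
    have := ler_wpM2l (hpi j) hq.
    suff -> : pi j * (h%:R / m%:R - alpha / Num.sqrt (pi j)) =
              h%:R / m%:R * pi j - alpha * Num.sqrt (pi j) by [].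
    rewrite -{1 3}(sqr_sqrtr (hpi j)); field; by rewrite (gt_eqF mpos) (gt_eqF spos).
  rewrite [X in _ <= X](big_cat_nat (n := lo)) //=; try lia.
  rewrite [X in _ <= _ + X](big_cat_nat (n := hi)) //=; try lia.
  have H1 : 0 <= \sum_(0 <= j < lo) g j by apply: sumr_ge0 => j _; exact: g0.
  have H2 : 0 <= \sum_(hi <= j < k.+1) g j by apply: sumr_ge0 => j _; exact: g0.
  move: H1 H2; rewrite /g; lra.
set A := \sum_(lo <= j < hi) f j.
have A0 : 0 <= A by apply: sumr_ge0 => j _; exact: f_ge0.
have cs := CS (index_iota lo hi) f.
rewrite size_iota in cs.
have Q0 : 0 <= \sum_(lo <= j < hi) f j ^+ 2 by apply: sumr_ge0 => j _; exact: sqr_ge0.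
have hl' : (hi - lo)%:R <= h%:R :> RR by rewrite ler_nat.
have cs2 : A ^+ 2 <= h%:R * \sum_(lo <= j < hi) f j ^+ 2.
  apply: le_trans cs _; apply: ler_wpM2r => //.
have e1 : \sum_(lo <= j < hi) (h%:R / m%:R * f j ^+ 2 - alpha * f j)
   = h%:R / m%:R * \sum_(lo <= j < hi) f j ^+ 2 - alpha * A.
  by rewrite big_split /= sumrN -!mulr_sumr.
rewrite e1 in step1.
set Q := \sum_(lo <= j < hi) f j ^+ 2 in Q0 cs2 step1.
have key : A ^+ 2 <= m%:R * S + m%:R * alpha * A.
  have e2 : h%:R / m%:R * Q = (h%:R * Q) / m%:R by rewrite mulrAC.
  rewrite e2 in step1.
  have : (h%:R * Q) <= m%:R * (S + alpha * A).
    by rewrite -ler_pdivrMl // mulrC; lra.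
  nra.
have S0 := S_ge0.
have mS0 : 0 <= m%:R * S by apply: mulr_ge0 => //; exact: ltW.
have sq := sqr_sqrtr mS0.
have s0 := sqrtr_ge0 (m%:R * S).
rewrite /B.
set s := Num.sqrt (m%:R * S) in sq s0 *.
have ma0 : 0 <= m%:R * alpha by apply: mulr_ge0; [exact: ltW | exact: ltW].
have [hc|//] := ltrP (m%:R * alpha + s) A.
have : A * (A - m%:R * alpha) <= s ^+ 2 by rewrite sq; nra.
have : s * s < A * (A - m%:R * alpha) by nra.
nra.
Qed.

Lemma dyadic n : forall lo, (lo <= i)%N -> (i <= lo + 2 ^ n)%N ->
  \sum_(lo <= j < i.-1) f j <= n%:R * B.
Proof.
elim: n => [|n IH] lo hlo hi.
  by rewrite big_geq ?mul0r //; rewrite expn0 in hi; lia.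
have p0 : (0 < 2 ^ n)%N by rewrite expn_gt0.
have hB := B_ge0.
have [h1|h1] := leqP i (lo + 2 ^ n).
  apply: le_trans (IH lo hlo h1) _.
  by rewrite -natr1 mulrDl mul1r lerDl.
rewrite expnS in hi.
have [h2|h2] := leqP i.-1 lo.
  rewrite big_geq //; apply: mulr_ge0 => //; exact: ler0n.
rewrite (big_cat_nat (n := (i - 2 ^ n)%N)) /=; try lia.
rewrite -natr1 mulrDl mul1r [X in _ <= X]addrC.
apply: lerD.
  apply: (block lo (i - 2 ^ n)%N (2 ^ n)%N) => //; try lia.
apply: IH; lia.
Qed.

Lemma f_le1 j : pi j <= 1 -> f j <= 1.
Proof.
move=> h1; rewrite /f /ind; case: ifP => _; rewrite ?mul0r ?mul1r //.
by rewrite -sqrtr1 ler_sqrt.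
Qed.

Lemma total n : (m <= 2 ^ n)%N -> (forall j, pi j <= 1) ->
  \sum_(j < i) f j <= 1 + n%:R * B.
Proof.
move=> hn h1.
rewrite -(big_mkord xpredT f).
have hB := B_ge0.
have nB : 0 <= n%:R * B by apply: mulr_ge0 => //; exact: ler0n.
have [i0|ipos] := posnP i.
  by rewrite i0 big_geq //; lra.
rewrite -(prednK ipos) big_nat_recr //=.
have := dyadic n 0%N (leq0n _) ltac:(lia).
have := @f_le1 i.-1 (h1 i.-1).
lra.
Qed.
End Key.

Lemma wj_ge0 m j p : 0 <= wj m j p.
Proof. exact: posp_ge0. Qed.

Lemma wj_le1 m j p : wj m j p <= 1.
Proof. by rewrite /wj /posp ge_max ler01 andbT lerBlDr lerDl normr_ge0. Qed.

Lemma pi_ge0 P m j : 0 <= piD P m j.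
Proof.
rewrite /piD /Rintegral; apply: fine_ge0; apply: integral_ge0 => x _.
by rewrite lee_fin wj_ge0.
Qed.

Lemma pi_le1 P m j : piD P m j <= 1.
Proof.
rewrite /piD /Rintegral.
have I0 : (0 <= \int[P]_(x in setT) (wj m j x.1)%:E)%E.
  by apply: integral_ge0 => x _; rewrite lee_fin wj_ge0.
have I1 : (\int[P]_(x in setT) (wj m j x.1)%:E <= 1)%E.
  apply: (le_trans (_ : _ <= \int[P]_(x in setT) (cst 1%:E) x)%E).

    apply: ge0_le_integral => //.
    - by move=> x _; rewrite lee_fin wj_ge0.
    - apply/measurable_EFinP.
have h0 : measurable_fun (T:=Real_sort__canonical__measurable_structure_SigmaRing RR) (U:=Real_sort__canonical__measurable_structure_SigmaRing RR) setT (wj m j).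
        rewrite /wj /posp.
        apply: measurable_maxr; last exact: measurable_cst.
        apply: measurable_funB; first exact: measurable_cst.
        apply: (@measurableT_comp _ _ _ _ _ _ (@Num.norm _ (RR : realType)) setT (fun p : (RR : realType) => m%:R * p - j%:R)); first exact: normr_measurable.
        apply: measurable_funB; last exact: measurable_cst.
        apply: measurable_funM; first exact: measurable_cst.
        exact: measurable_id.
      have h : measurable_fun (T:=measurableTypeR RR) (U:=Real_sort__canonical__measurable_structure_SigmaRing RR) setT (wj m j) := h0.
      exact: (measurableT_comp h measurable_fst).
    - by move=> x _; rewrite lee_fin wj_le1.
  by rewrite integral_cst //= probability_setT mule1.
move: I0 I1; case: (\int[P]_(x in setT) (wj m j x.1)%:E)%E => //= r; rewrite !lee_fin.
Qed.

Lemma ln2_ge : 1 / 2 <= ln (2 : RR).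
Proof.
have h := @le_ln1Dx _ (- (1 / 2) : RR) ltac:(lra).
have e : 1 + - (1 / 2) = (2 : RR)^-1 by field.
rewrite e lnV in h; last by rewrite posrE; lra.
lra.
Qed.

Lemma nlog m : (0 < m)%N -> (up_log 2 m)%:R <= 4 * ln (m%:R : RR).
Proof.
move=> hm.
have [m1|m2] := leqP m 1.
  have -> : m = 1%N by lia.
  by rewrite up_log1 ln1 mulr0.
have := up_log_bounds (p:=2) (n:=m) isT m2 => /= /andP [hlt _].
set n := up_log 2 m in hlt *.
have n1 : (0 < n)%N by rewrite /n up_log_gt0.
have l2 := ln2_ge.
have hlt' : ((2 ^ n.-1)%:R : RR) < m%:R by rewrite ltr_nat.
have : ln ((2 ^ n.-1)%:R : RR) < ln m%:R.
  by rewrite ltr_ln // posrE ltr0n ?expn_gt0 //; lia.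
rewrite natrX lnXn // => hl.
have hm2 : ln (2 : RR) <= ln m%:R.
  by rewrite ler_ln ?posrE ?ltr0n // ler_nat.
have e : (n%:R : RR) = n.-1%:R + 1 by rewrite natr1 prednK.
rewrite e.
have : ln 2 * n.-1%:R <= ln (m%:R : RR) by move: hl; rewrite -mulr_natr; lra.
nra.
Qed.

Theorem lemma7p3 :
  exists C : RR, 0 < C /\
  forall (P : probability Omega RR) (m i : nat),
    supported01 P -> (0 < m)%N -> (i <= m)%N ->
    forall alpha : RR, 0 < alpha ->
      \sum_(j < i)
         ind (i%:R / m%:R - alpha / Num.sqrt (piD P m j) < qD P m j)
         * Num.sqrt (piD P m j)
      <= 3 + C * ln m%:R * (alpha * m%:R + Num.sqrt (m%:R * SCDL P m)).
Proof.
exists 4; split; first lra.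
move=> P m i _ hm him alpha ha.
have hS : forall k, (k < m)%N ->
   \sum_(0 <= j < k.+1) piD P m j * posp (qD P m j - k.+1%:R / m%:R) <= SCDL P m.
  move=> k hk.
  rewrite big_mkord.
  pose F := fun k : 'I_m.+1 =>
     \sum_(j < k.+1) piD P m j * posp (qD P m j - k.+1%:R / m%:R)
     + \sum_(k.+1 <= j < m.+1) piD P m j * posp (k%:R / m%:R - qD P m j).
  have := le_bigmax 0 F (Ordinal (leqW hk)).
  rewrite /SCDL -/F; apply: le_trans.
  rewrite /F /= lerDl.
  apply: sumr_ge0 => j _; apply: mulr_ge0; [exact: pi_ge0 | exact: posp_ge0].
have T := @total m i (piD P m) (qD P m) (SCDL P m) alpha hm him (pi_ge0 P m) ha hS
  (up_log 2 m) (up_logP m (isT : (1 < 2)%N)) (pi_le1 P m).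
have hn := nlog m hm.
have hB : 0 <= m%:R * alpha + Num.sqrt (m%:R * SCDL P m).
  apply: addr_ge0; last exact: sqrtr_ge0.
  by apply: mulr_ge0; [rewrite ler0n | exact: ltW].
set B := m%:R * alpha + Num.sqrt (m%:R * SCDL P m) in T hB.
have := ler_wpM2r hB hn.
rewrite (mulrC alpha) -/B.
move: T; rewrite -mulrA.
lra.
Qed.
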